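(* Let $L:\mathbb{R}^d\to\mathbb{R}^{\mathcal{Y}}_+$ be a polyhedral loss and $\gamma$ a property. Then $L$ indirectly elicits $\gamma$ if and only if $L$ tightly embeds some discrete loss $\ell$ that indirectly elicits $\gamma$.
   Context: $\mathcal{Y}$ is a finite label set, $\Delta_{\mathcal{Y}}$ the simplex, $\mathbb{R}^{\mathcal{Y}}_+$ the nonnegative orthant. A property $\gamma:\Delta_{\mathcal{Y}}\rightrightarrows\mathcal{R}'$ maps each $p$ to a nonempty subset of $\mathcal{R}'$, with level sets $\gamma_r=\{p:r\in\gamma(p)\}$. A loss $L:\mathcal{R}\to\mathbb{R}^{\mathcal{Y}}_+$ is minimizable if $\inf_r\langle p,L(r)\rangle$ is attained for all $p$; then $\Gamma=\mathrm{prop}[L]$, $\Gamma(p)=\arg\min_r\langle p,L(r)\rangle$. Discrete: finite report set. Polyhedral: $L:\mathbb{R}^d\to\mathbb{R}^{\mathcal{Y}}_+$ with each coordinate a max of finitely many affine functions (such losses are minimizable). A minimizable loss with report set $\mathcal{R}$ indirectly elicits $\gamma$ if for every $r\in\mathcal{R}$ there is $r'\in\mathcal{R}'$ with $\Gamma_r\subseteq\gamma_{r'}$. $\mathcal{S}$ is representative for $\ell$ if $\mathrm{prop}[\ell](p)\cap\mathcal{S}\neq\emptyset$ for all $p$, minimum representative if of smallest cardinality. $L$ embeds $\ell$ if there exist a representative set $\mathcal{S}$ for $\ell$ and injective $\varphi:\mathcal{S}\to\mathbb{R}^d$ with $L(\varphi(r))=\ell(r)$ for $r\in\mathcal{S}$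 and $r\in\mathrm{prop}[\ell](p)\iff\varphi(r)\in\mathrm{prop}[L](p)$ for all $p$, $r\in\mathcal{S}$; tightly if $\mathcal{S}$ can be taken minimum representative. *)

(* Defs.v *)
From HB Require Import structures.
From mathcomp Require Import all_boot all_order all_algebra.
From mathcomp Require Import reals.
Set Implicit Arguments. Unset Strict Implicit. Unset Printing Implicit Defensive.
Import Order.TTheory GRing.Theory Num.Theory.
Local Open Scope ring_scope.

Section Defs.
Variables (R : realType) (Y : finType).

Definition simplex (p : Y -> R) : Prop :=
  (forall y, 0 <= p y) /\ \sum_(y : Y) p y = 1.

Definition eloss (p v : Y -> R) : R := \sum_(y : Y) p y * v y.

Definition nonneg_loss (Rep : Type) (L : Rep -> Y -> R) : Prop :=
  forall r y, 0 <= L r y.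

Definition prop_of (Rep : Type) (L : Rep -> Y -> R) (p : Y -> R) (r : Rep) : Prop :=
  forall r', eloss p (L r) <= eloss p (L r').

Definition minimizable (Rep : Type) (L : Rep -> Y -> R) : Prop :=
  forall p, simplex p -> exists r, prop_of L p r.

Definition is_property (R' : Type) (gamma : (Y -> R) -> R' -> Prop) : Prop :=
  forall p, simplex p -> exists r', gamma p r'.

Definition indirectly_elicits (Rep R' : Type) (L : Rep -> Y -> R)
  (gamma : (Y -> R) -> R' -> Prop) : Prop :=
  minimizable L /\
  forall r : Rep, exists r' : R',
    forall p, simplex p -> prop_of L p r -> gamma p r'.

Definition fmax (n : nat) (f : 'I_n.+1 -> R) : R :=
  \big[Num.max/f ord0]_(i < n.+1) f i.

Definition polyhedral (d : nat) (L : 'rV[R]_d -> Y -> R) : Prop :=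
  nonneg_loss L /\
  forall y : Y, exists (n : nat) (a : 'I_n.+1 -> 'rV[R]_d) (b : 'I_n.+1 -> R),
    forall u : 'rV[R]_d,
      L u y = fmax (fun i => \sum_(j < d) a i 0 j * u 0 j + b i).

Definition representative (Rep : finType) (l : Rep -> Y -> R) (S : {set Rep}) : Prop :=
  forall p, simplex p -> exists2 r, r \in S & prop_of l p r.

Definition min_representative (Rep : finType) (l : Rep -> Y -> R) (S : {set Rep}) : Prop :=
  representative l S /\ forall S', representative l S' -> (#|S| <= #|S'|)%N.

Definition embeds_via (d : nat) (L : 'rV[R]_d -> Y -> R) (Rep : finType)
  (l : Rep -> Y -> R) (S : {set Rep}) (phi : Rep -> 'rV[R]_d) : Prop :=
  [/\ representative l S,
      {in S &, injective phi},
      (forall r, r \in S -> L (phi r) = l r) &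
      (forall p r, simplex p -> r \in S -> (prop_of l p r <-> prop_of L p (phi r)))].

Definition embeds (d : nat) (L : 'rV[R]_d -> Y -> R) (Rep : finType)
  (l : Rep -> Y -> R) : Prop :=
  exists S phi, embeds_via L l S phi.

Definition tightly_embeds (d : nat) (L : 'rV[R]_d -> Y -> R) (Rep : finType)
  (l : Rep -> Y -> R) : Prop :=
  exists S phi, min_representative l S /\ embeds_via L l S phi.

End Defs.

(* Main.v *)
Require Import Defs.
From Stdlib Require Import Classical ClassicalEpsilon.
From HB Require Import structures.
From mathcomp Require Import all_boot all_order all_algebra.
From mathcomp Require Import reals.
From mathcomp Require Import ring lra.
Set Implicit Arguments. Unset Strict Implicit. Unset Printing Implicit Defensive.
Import Order.TTheory GRing.Theory Num.Theory.
Local Open Scope ring_scope.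

Definition decP (P : Prop) : bool :=
  if excluded_middle_informative P then true else false.
Lemma decPP (P : Prop) : reflect P (decP P).
Proof. by rewrite /decP; case: excluded_middle_informative => h; constructor. Qed.

Lemma minimal_ex (X : Type) (P : X -> Prop) (m : X -> nat) x :
  P x -> exists2 x0, P x0 & forall x', P x' -> (m x0 <= m x')%N.
Proof.
suff H : forall n x, (m x <= n)%N -> P x ->
    exists2 x0, P x0 & forall x', P x' -> (m x0 <= m x')%N.
  by move=> Px; exact: H _ x (leqnn _) Px.
elim=> [|n IH] x1 Hm Px1.
  exists x1 => // x' _; rewrite leqn0 in Hm; by rewrite (eqP Hm).
case: (classic (exists2 x', P x' & (m x' < m x1)%N)) => [[x' Px' lt]|Hn].
  apply: (IH x') => //; rewrite -ltnS; exact: leq_trans lt Hm.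
exists x1 => // x' Px'; rewrite leqNgt; apply/negP => lt; apply: Hn; by exists x'.
Qed.

Section Core.
Variables (R : realType) (Y : finType) (d : nat).

Lemma bigmax_ge (I : eqType) (s : seq I) (x0 : R) (F : I -> R) i :
  i \in s -> F i <= \big[Num.max/x0]_(j <- s) F j.
Proof.
elim: s => // j s IH; rewrite inE big_cons => /orP [/eqP -> | /IH H].
  by rewrite le_max lexx.
by rewrite le_max H orbT.
Qed.

Lemma fmax_ge n (f : 'I_n.+1 -> R) i : f i <= fmax f.
Proof. exact: bigmax_ge (mem_index_enum i). Qed.

Lemma fmax_attain n (f : 'I_n.+1 -> R) : exists i, fmax f = f i.
Proof.
rewrite /fmax; apply: (big_ind (fun x => exists i, x = f i)).
- by exists ord0.
- move=> x y [i ->] [j ->]; case: (leP (f i) (f j)) => h.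
  + by exists j.
  + by exists i.
- by move=> i _; exists i.
Qed.

Lemma small_t (s : seq R) : all (fun x => 0 < x) s ->
  exists2 t, 0 < t & all (fun x => t <= x) s.
Proof.
elim: s => [|x s IH]; first by exists 1.
rewrite /= => /andP [x0 /IH [t t0 Ht]].
exists (Num.min t x); first by rewrite lt_min t0 x0.
rewrite /= ge_min lexx orbT /=; apply/allP => z zs; by rewrite ge_min (allP Ht z zs).
Qed.

Variables (L : 'rV[R]_d -> Y -> R).
Variables (K : finType) (tg : K -> Y) (aff : K -> 'rV[R]_d -> R).
Hypothesis Haff : forall k u v t,
  aff k (u + t *: (u - v)) = aff k u + t * (aff k u - aff k v).
Hypothesis HL1 : forall u k, aff k u <= L u (tg k).
Hypothesis HL2 : forall u y, exists k, tg k = y /\ aff k u = L u y.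

Definition D := ({ffun Y -> K} * {set K})%type.
Definition Fs (x : D) u :=
  (forall k, aff k u <= aff (x.1 (tg k)) u) /\
  (forall k, k \in x.2 -> aff k u = aff (x.1 (tg k)) u).

Lemma pt_ex : exists pt : D -> 'rV[R]_d,
  forall x, (exists u, Fs x u) -> Fs x (pt x).
Proof.
have H : forall x, {u | (exists u, Fs x u) -> Fs x u}.
  move=> x; apply: constructive_indefinite_description.
  case: (classic (exists u, Fs x u)) => [[u Hu]|Hn]; first by exists u.
  by exists 0 => /Hn.
by exists (fun x => proj1_sig (H x)) => x; exact: (proj2_sig (H x)).
Qed.

Lemma core pt (Hpt : forall x, (exists u, Fs x u) -> Fs x (pt x)) p u0 :
  prop_of L p u0 -> exists r, prop_of L p (pt r).
Proof.
move=> Hu0.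
have [sf Hsf] : exists sf : Y -> K, forall y, tg (sf y) = y /\ aff (sf y) u0 = L u0 y.
  have H : forall y, {k | tg k = y /\ aff k u0 = L u0 y}.
    move=> y; apply: constructive_indefinite_description; exact: HL2.
  by exists (fun y => proj1_sig (H y)) => y; exact: (proj2_sig (H y)).
pose s := [ffun y => sf y].
pose I := [set k | aff k u0 == aff (s (tg k)) u0].
have Fu0 : Fs (s, I) u0.
  split=> k /=; last by rewrite inE => /eqP.
  rewrite ffunE (proj2 (Hsf _)); exact: HL1.
have [Gv Iv] := Hpt (s, I) (ex_intro _ u0 Fu0).
move: Gv Iv; set v := pt (s, I) => Gv Iv.
exists (s, I); rewrite -/v.
have LG : forall u, (forall k, aff k u <= aff (s (tg k)) u) ->
    forall y, L u y = aff (s y) u.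
  move=> u Gu y; have [k [tk ak]] := HL2 u y.
  apply/eqP; rewrite eq_le; apply/andP; split.
    rewrite -ak -tk; exact: Gu.
  have := HL1 u (s y); by rewrite ffunE (proj1 (Hsf y)).
pose c k u := aff (s (tg k)) u - aff k u.
pose sq := [seq c k u0 / (`|c k v| + 1) | k <- enum K & k \notin I].
have Hsq : all (fun x => 0 < x) sq.
  apply/allP => x /mapP [k]; rewrite mem_filter => /andP [kI _] ->.
  apply: divr_gt0; last by rewrite ltr_wpDl.
  rewrite inE in kI; rewrite /c subr_gt0 lt_def eq_sym kI /=.
  exact: (proj1 Fu0 k).
have [t t0 Ht] := small_t Hsq.
pose w := u0 + t *: (u0 - v).
have Gw : forall k, aff k w <= aff (s (tg k)) w.
  move=> k; rewrite !Haff.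
  case: (boolP (k \in I)) => kI.
    have e0 := Iv k kI; have e1 := kI; rewrite inE in e1.
    by rewrite /= e0 (eqP e1).
  have := allP Ht (c k u0 / (`|c k v| + 1))
    (map_f _ (_ : k \in [seq k <- enum K | k \notin I])).
  rewrite mem_filter kI mem_enum => /(_ isT).
  have cpos : 0 < c k u0.
    rewrite inE in kI; rewrite /c subr_gt0 lt_def eq_sym kI /=.
    exact: (proj1 Fu0 k).
  rewrite ler_pdivlMr; last by rewrite ltr_wpDl.
  have h1 : t * c k v <= t * `|c k v| by apply: ler_wpM2l; [exact: ltW | exact: ler_norm].
  have h2 : 0 <= t * c k u0 by rewrite mulr_ge0 ?ltW.
  rewrite /c in h1 h2 cpos *; move=> h3.
  nra.
have Lw y : L w y = L u0 y + t * (L u0 y - L v y).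
  by rewrite !LG // ?Haff //; [exact: (proj1 Fu0)].
have Ew : eloss p (L w) = eloss p (L u0) + t * (eloss p (L u0) - eloss p (L v)).
  rewrite /eloss -sumrB mulr_sumr -big_split; apply: eq_bigr => y _; rewrite Lw /=; ring.
have Hv : eloss p (L v) <= eloss p (L u0).
  have := Hu0 w; rewrite Ew => H.
  have : 0 <= t * (eloss p (L u0) - eloss p (L v)) by lra.
  by rewrite pmulr_rge0 // subr_ge0.
move=> r'; exact: le_trans Hv (Hu0 r').
Qed.

End Core.

Lemma poly_struct (R : realType) (Y : finType) (d : nat) (L : 'rV[R]_d -> Y -> R) :
  polyhedral L -> exists (K : finType) (tg : K -> Y) (aff : K -> 'rV[R]_d -> R),
  [/\ (forall k u v t, aff k (u + t *: (u - v)) = aff k u + t * (aff k u - aff k v)),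
      (forall u k, aff k u <= L u (tg k)) &
      (forall u y, exists k, tg k = y /\ aff k u = L u y)].
Proof.
case=> _ HP.
have [F HF] : exists F : Y -> {n : nat & (('I_n.+1 -> 'rV[R]_d) * ('I_n.+1 -> R))%type},
    forall y u, L u y = fmax (fun i => \sum_(j < d) (tagged (F y)).1 i 0 j * u 0 j
                                     + (tagged (F y)).2 i).
  have H : forall y, {x : {n : nat & (('I_n.+1 -> 'rV[R]_d) * ('I_n.+1 -> R))%type} |
     forall u, L u y = fmax (fun i => \sum_(j < d) (tagged x).1 i 0 j * u 0 j
                                     + (tagged x).2 i)}.
    move=> y; apply: constructive_indefinite_description.
    have [n [a [b Hab]]] := HP y.
    by exists (existT _ n (a, b)).
  by exists (fun y => proj1_sig (H y)) => y; exact: (proj2_sig (H y)).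
exists {y : Y & 'I_(tag (F y)).+1}, (fun k => tag k).
exists (fun k u => \sum_(j < d) (tagged (F (tag k))).1 (tagged k) 0 j * u 0 j
                 + (tagged (F (tag k))).2 (tagged k)).
split.
- move=> [y i] u v t /=.
  set a := (tagged (F y)).1 i; set b := (tagged (F y)).2 i.
  suff -> : \sum_(j < d) a 0 j * (u + t *: (u - v)) 0 j =
    \sum_(j < d) a 0 j * u 0 j + t * (\sum_(j < d) a 0 j * u 0 j - \sum_(j < d) a 0 j * v 0 j).
    ring.
  rewrite -sumrB mulr_sumr -big_split; apply: eq_bigr => j _; rewrite !mxE /=; ring.
- move=> u [y i] /=; rewrite HF.
  exact: (fmax_ge (fun i0 => \sum_(j < d) (tagged (F y)).1 i0 0 j * u 0 j
                                     + (tagged (F y)).2 i0) i).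
- move=> u y.
  have [i Hi] := fmax_attain (fun i0 => \sum_(j < d) (tagged (F y)).1 i0 0 j * u 0 j
                                     + (tagged (F y)).2 i0).
  by exists (existT _ y i); split => //=; rewrite HF Hi.
Qed.

Theorem lemma4 (R : realType) (Y : finType) (d : nat) (R' : Type)
  (L : 'rV[R]_d -> Y -> R) (gamma : (Y -> R) -> R' -> Prop) :
  (0 < #|Y|)%N ->
  polyhedral L ->
  is_property gamma ->
  indirectly_elicits L gamma <->
  exists (Rep : finType) (l : Rep -> Y -> R),
    [/\ nonneg_loss l, tightly_embeds L l & indirectly_elicits l gamma].
Proof.
move=> Y0 HP Hg; split.
- case=> Hmin Hel.
  have [K [tg [aff [Haff HL1 HL2]]]] := poly_struct HP.
  have [pt Hpt] := pt_ex tg aff.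
  pose l := fun r : D Y K => L (pt r).
  have Hcore p : simplex p -> exists r, prop_of L p (pt r).
    move=> sp; have [u Hu] := Hmin p sp; exact: (core Haff HL1 HL2 Hpt Hu).
  have Heq p r : simplex p -> (prop_of l p r <-> prop_of L p (pt r)).
    move=> sp; split => H; last by move=> r'; exact: H.
    move=> u; have [r0 H0] := Hcore p sp; exact: le_trans (H r0) (H0 u).
  have Hrep : representative l [set: D Y K].
    move=> p sp; have [r Hr] := Hcore p sp; exists r; rewrite ?in_setT //.
    exact/(Heq p r sp).
  have [S0 HS0 Smin] := minimal_ex (P := fun S => representative l S) (fun S => #|S|) Hrep.
  exists (D Y K), l; split.
  + by move=> r y; exact: HP.1.
  + exists S0, pt; split; first by split.
    split => //.
    * move=> r1 r2 r1S r2S e; case: (eqVneq r1 r2) => // ne; exfalso.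
      have : representative l (S0 :\ r2).
        move=> p sp; have [r rS Hr] := HS0 p sp.
        case: (eqVneq r r2) => [er|ner].
          exists r1; first by rewrite !inE ne r1S.
          by rewrite er in Hr; rewrite /prop_of /l e; exact: Hr.
        by exists r; rewrite // !inE ner rS.
      move/Smin; rewrite (cardsD1 r2 S0) r2S /=.
      by rewrite add1n ltnn.
    * move=> p r sp _; exact: Heq.
  + split.
    * move=> p sp; have [r Hr] := Hcore p sp; exists r; exact/(Heq p r sp).
    * move=> r; have [r' Hr'] := Hel (pt r); exists r' => p sp H.
      exact: Hr' sp (proj1 (Heq p r sp) H).
- case=> Rep [l [Hnn [S [phi [[HSrep _] [Hrep Hinj HL Heq]]]] [Hlmin Hlel]]].
  split.
  + move=> p sp; have [r rS Hr] := Hrep p sp; exists (phi r); exact/(Heq p r sp rS).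
  + move=> u.
    case: (classic (exists q, simplex q /\ prop_of L q u)) => [[q0 [sq0 Hq0]] | Hno]; last first.
      have [y0 _] : exists y0 : Y, y0 \in Y by apply/card_gt0P.
      pose p0 := fun y : Y => if y == y0 then 1 else 0 : R.
      have sp0 : simplex p0.
        split; first by move=> y; rewrite /p0; case: (y == y0).
        rewrite (bigD1 y0) //= /p0 eqxx big1 ?addr0 // => y /negPf ->; done.
      have [r' _] := Hg p0 sp0.
      exists r' => p sp H; exfalso; apply: Hno; exists p; by split.
    pose Rq q := [set r in S | decP (prop_of l q r)].
    have [q1 [sq1 Hq1] Hmin] := minimal_ex (P := fun q => simplex q /\ prop_of L q u)
                                  (fun q => #|Rq q|) (conj sq0 Hq0).
    have [r rS Hr] := Hrep q1 sq1.
    have Hall : forall q, simplex q -> prop_of L q u -> prop_of l q r.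
      move=> q sq Hq.
      pose m := fun y => (q1 y + q y) / 2 : R.
      have sm : simplex m.
        split.
          move=> y; rewrite /m divr_ge0 // addr_ge0 //; [exact: sq1.1 | exact: sq.1].
        rewrite /m -mulr_suml big_split /= sq1.2 sq.2; lra.
      have Em v : eloss m v = (eloss q1 v + eloss q v) / 2.
        rewrite /eloss -big_split /= mulr_suml; apply: eq_bigr => y _; rewrite /m /=; ring.
      have Hm : prop_of L m u.
        move=> v; rewrite !Em; have := Hq1 v; have := Hq v; lra.
      have sub : forall r0, r0 \in S -> prop_of l m r0 -> prop_of l q1 r0 /\ prop_of l q r0.
        move=> r0 r0S /(Heq _ _ sm r0S) H.
        have Hb := H u; rewrite !Em in Hb.
        have h1 := Hq1 (phi r0); have h2 := Hq (phi r0).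
        split; apply/(Heq _ _ _ r0S) => // v.
          have := Hq1 v; lra.
        have := Hq v; lra.
      have Rsub : Rq m \subset Rq q1 :&: Rq q.
        apply/subsetP => x; rewrite !inE => /andP [xS /decPP Hx].
        have [h1 h2] := sub x xS Hx.
        rewrite xS /=; apply/andP; split; exact/decPP.
      have eR : Rq m = Rq q1.
        apply/eqP; rewrite eqEcard (subset_trans Rsub (subsetIl _ _)) /=.
        apply: Hmin; by split.
      have rR : r \in Rq m by rewrite eR inE rS /=; exact/decPP.
      have := subsetP Rsub r rR; rewrite !inE => /andP [_ /andP [_ H]]; exact/decPP.
    have [r' Hr'] := Hlel r.
    exists r' => p sp H; exact: (Hr' p sp (Hall p sp H)).
Qed.
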